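(* Let $k,n\in\mathbb N^+$ and $\mathbf C=(c_0,\dots,c_k)\in\{0,1\}^{k+1}$. For every integer $m$ with $1\le m\le n$, $$O_{\mathbf C}(n,m+c_k-1)=(n-1)!^k\sum_{\substack{J\subseteq\{2,\dots,n\}\\ |J|=m-1}}\ \prod_{j\in J}F_j(\mathbf C)\prod_{j\in\{2,\dots,n\}\setminus J}F_j(\mathbf C'),$$ and for every integer $m\ge 0$ with $m=0$ or $m>n$, $O_{\mathbf C}(n,m+c_k-1)=0$.
   Context: Fix integers $k\ge 1$, $n\ge 1$ and a vector $\mathbf C=(c_0,c_1,\dots,c_k)\in\{0,1\}^{k+1}$; put $\mathbf C'=(1,\dots,1)-\mathbf C=(c'_0,\dots,c'_k)$. Consider $k$-tuples $(\pi_1,\dots,\pi_k)$ of permutations of $\{1,\dots,n\}$ (there are $n!^k$ of them). A position $\alpha\in\{1,\dots,n\}$ is a record of a permutation $\pi$ if $\pi(\alpha)<\pi(\alpha')$ for every $\alpha'<\alpha$ (so position $1$ is always a record); equivalently, the records index the unique minimum-cardinality subset of the points $\{(\alpha,\pi(\alpha))\}$ such that every point either lies in it or is strictly dominated in both coordinates by one of its points (the ''optimization set'' for the relation $(<,<)$). For a tuple, let $l_\alpha$ be the number of $\beta\in\{1,\dots,k\}$ for which $\alpha$ is a record of $\pi_\beta$ (so $l_1=k$). The $\mathbf C$ sequential optimization set of the tuple is $S=\{\alpha: c_{l_\alpha}=1\}$, and its weight is $|S|$. For an integer $m$, the $\mathbf C$ sequential optimization number $O_{\mathbf C}(n,m)$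 is the number of $k$-tuples whose weight equals $m$ (so $O_{\mathbf C}(n,m)=0$ if $m<0$ or $m>n$). For $j\ge 2$ and $X=(x_0,\dots,x_k)\in\mathbb R^{k+1}$ set $F_j(X)=\sum_{\beta=0}^k\binom{k}{\beta}\frac{x_\beta}{(j-1)^\beta}$. Empty products equal $1$. *)

(* Defs.v *)
From mathcomp Require Import all_boot all_order fingroup perm all_algebra.
Set Implicit Arguments. Unset Strict Implicit. Unset Printing Implicit Defensive.
Import Order.TTheory GRing.Theory Num.Theory.

(* Positions {1..n} are encoded as 'I_n = {0..n-1}; permutations of {1..n} as 'S_n.
   Position a is a record of p iff p a < p a' for every earlier position a'. *)
Definition is_record (n : nat) (p : 'S_n) (a : 'I_n) : bool :=
  [forall a' : 'I_n, (a' < a)%N ==> (p a < p a')%N].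

Definition nrec (k n : nat) (t : {ffun 'I_k -> 'S_n}) (a : 'I_n) : nat :=
  #|[set b : 'I_k | is_record (t b) a]|.

Definition seqopt_set (k n : nat) (c : 'I_k.+1 -> bool) (t : {ffun 'I_k -> 'S_n})
  : {set 'I_n} :=
  [set a : 'I_n | c (inord (nrec t a))].

(* O_C(n,m), for an integer m (zero when m < 0 or m > n automatically). *)
Definition Onum (k n : nat) (c : 'I_k.+1 -> bool) (m : int) : nat :=
  #|[set t : {ffun 'I_k -> 'S_n} | Posz #|seqopt_set c t| == m]|.

Definition Fj (k j : nat) (x : 'I_k.+1 -> rat) : rat :=
  (\sum_(b < k.+1) ('C(k, b))%:R * x b / ((j.-1)%:R ^+ b))%R.

Definition vecC (k : nat) (c : 'I_k.+1 -> bool) : 'I_k.+1 -> rat :=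
  fun b => (nat_of_bool (c b))%:R%R.
Definition vecC' (k : nat) (c : 'I_k.+1 -> bool) : 'I_k.+1 -> rat :=
  fun b => (1 - (nat_of_bool (c b))%:R)%R.

(* Main.v *)
Require Import Defs.
From mathcomp Require Import all_boot all_order fingroup perm all_algebra.
From mathcomp Require Import zify ring.
Import Order.TTheory GRing.Theory Num.Theory.
Set Implicit Arguments. Unset Strict Implicit. Unset Printing Implicit Defensive.

Lemma card_lt_ord n v : (v <= n)%N -> #|[set x : 'I_n | (x < v)%N]| = v.
Proof.
move=> hv.
have -> : [set x : 'I_n | (x < v)%N] = [set widen_ord hv y | y in 'I_v].
  apply/setP=> x; rewrite !inE; apply/idP/imsetP.
    by move=> xv; exists (Ordinal xv) => //; apply: val_inj.
  by case=> y _ ->; rewrite /= ltn_ord.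
rewrite card_imset ?card_ord // => y1 y2 e; apply: val_inj; exact: (congr1 val e).
Qed.

Definition code n (p : 'S_n) (a : 'I_n) : nat :=
  #|[set a' : 'I_n | (a' < a)%N && (p a' < p a)%N]|.

Lemma record_code n (p : 'S_n) a : is_record p a = (code p a == 0%N).
Proof.
rewrite /is_record /code cards_eq0; apply/forallP/eqP.
  move=> h; apply/setP=> x; rewrite !inE; apply/negbTE.
  have := h x; case: (x < a)%N => //= hx; rewrite -leqNgt ltnW //.
move=> /setP h x; apply/implyP=> xa; have := h x; rewrite !inE xa /= => /negbT.
rewrite -leqNgt leq_eqVlt => /orP [/eqP/val_inj/perm_inj ea|//].
by move: xa; rewrite ea ltnn.
Qed.

Lemma code_le n (p : 'S_n) a : (code p a <= a)%N.
Proof.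
rewrite /code -{2}(@card_lt_ord n a (ltnW (ltn_ord a))).
by apply: subset_leq_card; apply/subsetP=> x; rewrite !inE => /andP[].
Qed.

Lemma code0 n (p : 'S_n) (a : 'I_n) : val a = 0%N -> code p a = 0%N.
Proof.
move=> h; apply/eqP; rewrite /code cards_eq0; apply/eqP/setP=> x.
by rewrite !inE h ltn0.
Qed.

Lemma perm_rank n (p : 'S_n) x : #|[set y | (p y < p x)%N]| = p x.
Proof.
have -> : [set y | (p y < p x)%N] = p @^-1: [set v : 'I_n | (v < p x)%N].
  by apply/setP=> y; rewrite !inE.
by rewrite card_preimset ?card_lt_ord //; [apply: ltnW | apply: perm_inj].
Qed.

Lemma downset_sub n (p q : 'S_n) (j : 'I_n) :
  (forall i1 i2 : 'I_n, (i1 < j)%N -> (i2 < j)%N -> (p i1 < p i2)%N = (q i1 < q i2)%N) ->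
  code p j = code q j ->
  [set a' : 'I_n | (a' < j)%N && (p a' < p j)%N] \subset
  [set a' : 'I_n | (a' < j)%N && (q a' < q j)%N].
Proof.
move=> hpat hc; apply/subsetP=> i; rewrite !inE => /andP[ij pij].
rewrite ij /=; rewrite ltnNge; apply/negP => qji.
have qji' : (q j < q i)%N.
  rewrite ltn_neqAle qji andbT; apply/negP=> /eqP/val_inj/perm_inj eji.
  by move: ij; rewrite eji ltnn.
have: (code q j < code p j)%N.
  rewrite /code; apply: (@leq_ltn_trans
     #|[set a' : 'I_n | (a' < j)%N && (p a' < p j)%N] :\ i|).
    apply: subset_leq_card; apply/subsetP=> x; rewrite !inE => /andP[xj qxj].
    rewrite xj /=.
    have qxi : (q x < q i)%N by apply: ltn_trans qji'.
    rewrite -(hpat _ _ xj ij) in qxi.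
    rewrite (ltn_trans qxi pij) andbT.
    by apply/negP=> /eqP exi; move: qxi; rewrite exi ltnn.
  by rewrite [X in (_ < X)%N](cardsD1 i) !inE ij pij.
by rewrite hc ltnn.
Qed.

Lemma perm_lt_swap n (p : 'S_n) x y : x != y -> (p y < p x)%N = ~~ (p x < p y)%N.
Proof.
move=> nxy; rewrite ltnNge leq_eqVlt negb_or.
rewrite (_ : (val (p x) == val (p y)) = false) //; apply/negbTE.
by apply: contra nxy => /eqP/val_inj/perm_inj ->.
Qed.

Lemma code_inj n (p q : 'S_n) : (forall a, code p a = code q a) -> p = q.
Proof.
move=> hc.
have pat : forall j i : 'I_n, (i < j)%N -> (p i < p j)%N = (q i < q j)%N.
  move=> j; elim: {j}(val j) {-2}j (leqnn j) => [|J IH] j hj i ij.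
    by move: ij; rewrite leqn0 in hj; rewrite (eqP hj).
  have hpat : forall i1 i2 : 'I_n, (i1 < j)%N -> (i2 < j)%N ->
       (p i1 < p i2)%N = (q i1 < q i2)%N.
    move=> i1 i2 h1 h2; case: (ltngtP i1 i2) => h12.
    - by apply: IH => //; rewrite -ltnS (leq_trans h2).
    - have e := IH i1 (leq_trans h1 hj) i2 h12.
      have ne1 : p i1 != p i2 by apply/negP=> /eqP/perm_inj e12; move: h12; rewrite e12 ltnn.
      have ne2 : q i1 != q i2 by apply/negP=> /eqP/perm_inj e12; move: h12; rewrite e12 ltnn.
      rewrite ltn_neqAle leqNgt e -leqNgt.
      rewrite [RHS]ltn_neqAle.
      congr (_ && _); apply/idP/idP; [move=> _|move=> _]; [by []|].
      by apply/negP=> /eqP/val_inj e12; move/negP: ne1; rewrite e12.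
    - by rewrite (val_inj h12) !ltnn.
  have e1 := downset_sub hpat (hc j).
  have e2 : [set a' : 'I_n | (a' < j)%N && (q a' < q j)%N] \subset
            [set a' : 'I_n | (a' < j)%N && (p a' < p j)%N].
    by apply: downset_sub => // i1 i2 h1 h2; rewrite hpat.
  have E : [set a' : 'I_n | (a' < j)%N && (p a' < p j)%N] =
           [set a' : 'I_n | (a' < j)%N && (q a' < q j)%N].
    by apply/eqP; rewrite eqEsubset e1 e2.
  have H := congr1 (fun S : {set 'I_n} => i \in S) E.
  by move: H; rewrite /= !inE ij.
apply/permP=> x; apply: val_inj; rewrite /= -perm_rank -(perm_rank q).
apply: eq_card => y; rewrite !inE.
case: (ltngtP y x) => h.
- by apply: pat.
- have nxy : x != y by apply/negP=> /eqP e; move: h; rewrite e ltnn.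
  by rewrite !(perm_lt_swap _ nxy) pat.
- by rewrite (val_inj h) !ltnn.
Qed.

Lemma card_ffam (T U : finType) (G : T -> {set U}) :
  #|[set f : {ffun T -> U} | [forall a, f a \in G a]]| = (\prod_a #|G a|)%N.
Proof.
transitivity (\prod_a \sum_(x | x \in G a) 1)%N; last first.
  by apply: eq_bigr => a _; rewrite sum1_card.
rewrite (bigA_distr_big_dep _ (fun a x => 1%N)) /= -sum1_card.
rewrite big_mkcond [RHS]big_mkcond /=; apply: eq_bigr => f _.
rewrite inE prod_nat_const exp1n.
case: (@forallP _ (fun a => f a \in G a)) => h; case: familyP => // h'.
Qed.

Lemma count_family (T U : finType) (F : T -> {set U}) (P : T -> pred U) w :
  #|[set f : {ffun T -> U} | [forall a, f a \in F a] && (#|[set a | P a (f a)]| == w)]| =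
  (\sum_(J : {set T} | #|J| == w)
     (\prod_(a in J) #|F a :&: [set x | P a x]| *
      \prod_(a in ~: J) #|F a :&: [set x | ~~ P a x]|))%N.
Proof.
rewrite -sum1_card.
rewrite (partition_big (fun f : {ffun T -> U} => [set a | P a (f a)]) (fun J : {set T} => #|J| == w)); last first.
  by move=> f; rewrite inE => /andP[].
apply: eq_bigr => J hJ.
pose G a := if a \in J then F a :&: [set x | P a x] else F a :&: [set x | ~~ P a x].
transitivity #|[set f : {ffun T -> U} | [forall a, f a \in G a]]|.
  rewrite -sum1_card; apply: eq_bigl => f; rewrite !inE.
  apply/idP/forallP.
    case/andP=> /andP[/forallP hF _] /eqP hS a; rewrite /G -hS inE.
    by case E: (P a (f a)); rewrite !inE hF E.
  move=> h.
  have hS : [set a | P a (f a)] = J.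
    apply/setP=> a; rewrite inE; have := h a; rewrite /G.
    by case: (a \in J); rewrite !inE => /andP[_] // /negbTE.
  rewrite hS eqxx hJ !andbT; apply/forallP=> a; have := h a; rewrite /G.
  by case: (a \in J); rewrite !inE => /andP[].
rewrite card_ffam (bigID (fun a => a \in J)) /=; congr (_ * _)%N.
  by apply: eq_bigr => a aJ; rewrite /G aJ.
by apply: eq_big => a; [rewrite inE | rewrite /G => /negbTE ->].
Qed.

Lemma box_zero_count k N u beta : (u < N)%N ->
  #|[set g : {ffun 'I_k -> 'I_N} | [forall b, g b \in [set x : 'I_N | (x <= u)%N]]
       && (#|[set b | val (g b) == 0%N]| == beta)]| = ('C(k, beta) * u ^ (k - beta))%N.
Proof.
move=> uN.
rewrite (count_family (fun b => [set x : 'I_N | (x <= u)%N]) (fun b x => val x == 0%N)).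
have c1 : #|[set x : 'I_N | (x <= u)%N] :&: [set x | val x == 0%N]| = 1%N.
  rewrite -(@card_lt_ord N 1); last by apply: leq_ltn_trans uN.
  by apply: eq_card => x; rewrite !inE ltnS leqn0 andbC; case: eqP => // ->.
have c2 : #|[set x : 'I_N | (x <= u)%N] :&: [set x | val x != 0%N]| = u.
  have x0N : (0 < N)%N by apply: leq_ltn_trans uN.
  have h1 := @card_lt_ord N u.+1 uN.
  have h0 : Ordinal x0N \in [set x : 'I_N | (x < u.+1)%N] by rewrite inE.
  rewrite (cardsD1 (Ordinal x0N)) h0 add1n in h1; case: h1 => h1.
  rewrite -[X in _ = X]h1; apply: eq_card => x; rewrite !inE ltnS andbC; by congr (_ && _).
transitivity (\sum_(J : {set 'I_k} | #|J| == beta) (u ^ (k - beta)))%N.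
  apply: eq_bigr => J /eqP hJ.
  rewrite !prod_nat_const c1 c2 exp1n mul1n.
  by rewrite cardsCs setCK card_ord hJ.
rewrite sum_nat_const; congr (_ * _)%N.
have := card_draws 'I_k beta; rewrite card_ord => <-; apply: eq_card => J; by rewrite inE.
Qed.

Lemma box_count k N u (c : 'I_k.+1 -> bool) : (u < N)%N ->
  #|[set g : {ffun 'I_k -> 'I_N} | [forall b, g b \in [set x : 'I_N | (x <= u)%N]]
       && c (inord #|[set b | val (g b) == 0%N]|)]| =
  (\sum_(beta < k.+1) c beta * ('C(k, beta) * u ^ (k - beta)))%N.
Proof.
move=> uN; rewrite -sum1_card.
rewrite (partition_big (fun g : {ffun 'I_k -> 'I_N} => (inord #|[set b | val (g b) == 0%N]| : 'I_k.+1)) predT) //.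
apply: eq_bigr => beta _.
rewrite -(@box_zero_count k N u beta uN) -sum1_card.
case cb: (c beta); last first.
  rewrite mul0n big_pred0 // => g; rewrite !inE.
  case: (_ =P beta) => [e|_]; last by rewrite andbF.
  by rewrite e cb andbF.
rewrite mul1n; apply: eq_bigl => g; rewrite !inE.
have zk : (#|[set b | val (g b) == 0%N]| <= k)%N.
  by apply: leq_trans (max_card _) _; rewrite card_ord.
apply/idP/idP.
  case/andP=> /andP[hA _] /eqP <-; by rewrite hA /= inordK ?ltnS.
case/andP=> -> /eqP hz.
have -> : (inord #|[set b | val (g b) == 0%N]| : 'I_k.+1) = beta.
  by apply: val_inj; rewrite /= inordK hz.
by rewrite cb eqxx.
Qed.

Local Open Scope ring_scope.

Lemma reindex_sets (T T' : finType) (h : T -> T') (hinj : injective h)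
  (pS : pred T') (hS : forall j, pS j = (j \in h @: setT)) (A B : T' -> rat) w :
  \sum_(J' : {set T'} | (J' \subset [set j | pS j]) && (#|J'| == w))
     ((\prod_(j in J') A j) * (\prod_(j : T' | pS j && (j \notin J')) B j))
  = \sum_(J : {set T} | #|J| == w)
     ((\prod_(i in J) A (h i)) * (\prod_(i in ~: J) B (h i))).
Proof.
pose G (J' : {set T'}) := (\prod_(j in J') A j) * (\prod_(j : T' | pS j && (j \notin J')) B j).
have pre_im : forall J : {set T}, h @^-1: (h @: J) = J.
  by move=> J; apply/setP=> x; rewrite inE mem_imset.
transitivity (\sum_(J : {set T} | #|J| == w) G (h @: J)); last first.
  apply: eq_bigr => J _; rewrite /G big_imset; last by move=> x y _ _; apply: hinj.
  congr (_ * _).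
  rewrite -(big_imset (h:=h) (A:= ~: J) B); last by move=> x y _ _; apply: hinj.
  apply: eq_bigl => j; rewrite hS.
  apply/andP/imsetP.
    case=> /imsetP[x _ ->] nj; exists x => //; rewrite inE.
    by apply: contra nj => xJ; apply: imset_f.
  case=> x; rewrite inE => xJ ->; split; first by apply: imset_f.
  by rewrite mem_imset.
rewrite (reindex_onto (fun J : {set T} => h @: J) (fun J' : {set T'} => h @^-1: J')) /=; last first.
  move=> J' /andP[/subsetP sub _]; apply/setP=> j; apply/imsetP/idP.
    by case=> x; rewrite inE => ? ->.
  move=> jJ; have := sub j jJ; rewrite inE hS => /imsetP[x _ ejx].
  by exists x => //; rewrite inE -ejx.
apply: eq_bigl => J; rewrite pre_im eqxx andbT card_imset //.
have -> // : h @: J \subset [set j | pS j].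
apply/subsetP=> j /imsetP[x _ ->]; rewrite inE hS; exact: imset_f.
Qed.

Lemma nrec0 k n' (t : {ffun 'I_k -> 'S_n'.+1}) : nrec t ord0 = k.
Proof.
rewrite /nrec; transitivity #|[set: 'I_k]|; last by rewrite cardsT card_ord.
apply: eq_card => b; rewrite !inE.
by apply/forallP => a'; rewrite ltn0.
Qed.

Definition Xw k n' (c : 'I_k.+1 -> bool) (t : {ffun 'I_k -> 'S_n'.+1}) :=
  #|[set a : 'I_n' | c (inord (nrec t (lift ord0 a)))]|.

Lemma seqopt_card k n' c (t : {ffun 'I_k -> 'S_n'.+1}) :
  #|seqopt_set c t| = (c ord_max + Xw c t)%N.
Proof.
rewrite (cardsD1 ord0) /seqopt_set inE nrec0.
have -> : (inord k : 'I_k.+1) = ord_max by apply: val_inj; rewrite /= inordK.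
congr (_ + _)%N; rewrite /Xw -(card_imset _ (@lift_inj n'.+1 ord0)).
apply: eq_card => x; rewrite !inE.
case: (unliftP ord0 x) => [j ->|->].
  by rewrite mem_imset ?inE ?neq_lift //; apply: lift_inj.
rewrite eqxx /=; apply/esym/negP => /imsetP[y _ /eqP]; by rewrite (negbTE (neq_lift _ _)).
Qed.

Lemma Xw_le k n' c (t : {ffun 'I_k -> 'S_n'.+1}) : (Xw c t <= n')%N.
Proof. by rewrite /Xw; apply: leq_trans (max_card _) _; rewrite card_ord. Qed.

Lemma Onum_Xw k n' c m : (1 <= m)%N ->
  @Onum k n'.+1 c (Posz m + Posz (nat_of_bool (c ord_max)) - 1)%R =
  #|[set t : {ffun 'I_k -> 'S_n'.+1} | Xw c t == m.-1]|.
Proof.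
move=> hm; rewrite /Onum; apply: eq_card => t; rewrite !inE seqopt_card.
apply/eqP/eqP => h; lia.
Qed.

Lemma Onum_zero k n' c m : (m == 0)%N || (n'.+1 < m)%N ->
  @Onum k n'.+1 c (Posz m + Posz (nat_of_bool (c ord_max)) - 1)%R = 0%N.
Proof.
move=> hm; rewrite /Onum; apply/eqP; rewrite cards_eq0; apply/eqP/setP => t.
rewrite !inE seqopt_card; have := Xw_le c t.
move=> hX; apply/negbTE/negP => /eqP; lia.
Qed.

Definition Phi k n' (t : {ffun 'I_k -> 'S_n'.+1}) :
  {ffun 'I_n' -> {ffun 'I_k -> 'I_n'.+1}} :=
  [ffun a => [ffun b => inord (code (t b) (lift ord0 a))]].

Lemma Phi_val k n' (t : {ffun 'I_k -> 'S_n'.+1}) a b :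
  val (Phi t a b) = code (t b) (lift ord0 a).
Proof.
by rewrite /Phi !ffunE /= inordK // (leq_ltn_trans (code_le _ _) (ltn_ord _)).
Qed.

Lemma nrec_Phi k n' (t : {ffun 'I_k -> 'S_n'.+1}) a :
  nrec t (lift ord0 a) = #|[set b | val (Phi t a b) == 0%N]|.
Proof. by apply: eq_card => b; rewrite !inE Phi_val record_code. Qed.

Lemma Phi_inj k n' : injective (@Phi k n').
Proof.
move=> t1 t2 e; apply/ffunP => b; apply: code_inj => x.
case: (unliftP ord0 x) => [j ->|->]; last by rewrite !code0.
by rewrite -!Phi_val e.
Qed.

Definition Box k n' (a : 'I_n') : {set {ffun 'I_k -> 'I_n'.+1}} :=
  [set g : {ffun 'I_k -> 'I_n'.+1} | [forall b, g b \in [set x : 'I_n'.+1 | (x <= a.+1)%N]]].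

Lemma prod_expn (I : finType) (F : I -> nat) k :
  (\prod_i F i ^ k = (\prod_i F i) ^ k)%N.
Proof.
elim: k => [|k IH]; first by rewrite big1.
by rewrite expnS -IH -big_split /=; apply: eq_bigr => i _; rewrite expnS.
Qed.

Lemma Phi_image k n' :
  (@Phi k n') @: setT = [set D : {ffun 'I_n' -> {ffun 'I_k -> 'I_n'.+1}} | [forall a, D a \in Box k a]].
Proof.
apply/eqP; rewrite eqEcard; apply/andP; split.
  apply/subsetP => D /imsetP[t _ ->]; rewrite inE; apply/forallP => a.
  rewrite inE; apply/forallP => b; rewrite inE Phi_val.
  by rewrite (leq_trans (code_le _ _)) // lift0.
rewrite card_imset; last exact: Phi_inj.
rewrite cardsT card_ffun card_Sn !card_ord card_ffam.
rewrite (eq_bigr (fun a : 'I_n' => (a.+2) ^ k)%N); last first.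
  move=> a _; rewrite /Box card_ffam.
  rewrite (eq_bigr (fun _ => a.+2)) ?prod_nat_const ?card_ord //.
  move=> b _; rewrite -(@card_lt_ord n'.+1 a.+2); last by rewrite ltnS ltn_ord.
  by apply: eq_card => x; rewrite !inE.
rewrite prod_expn; apply: eq_leq; congr (_ ^ _)%N.
rewrite fact_prod big_ltn // mul1n.
rewrite (big_addn 0 _ 2) big_mkord subSS subSS subn0.
by apply: eq_bigr => i _; rewrite addn2.
Qed.

Definition Pz k n' (c : 'I_k.+1 -> bool) (a : 'I_n') (g : {ffun 'I_k -> 'I_n'.+1}) :=
  c (inord #|[set b | val (g b) == 0%N]|).

Lemma count_Xw k n' (c : 'I_k.+1 -> bool) w :
  #|[set t : {ffun 'I_k -> 'S_n'.+1} | Xw c t == w]| =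
  #|[set D : {ffun 'I_n' -> {ffun 'I_k -> 'I_n'.+1}} |
      [forall a, D a \in Box k a] && (#|[set a | Pz c a (D a)]| == w)]|.
Proof.
rewrite -(card_imset _ (@Phi_inj k n')); apply: eq_card => D; rewrite inE.
have XP : forall t : {ffun 'I_k -> 'S_n'.+1}, Xw c t = #|[set a | Pz c a (Phi t a)]|.
  by move=> t; rewrite /Xw; apply: eq_card => a; rewrite !inE /Pz nrec_Phi.
apply/imsetP/andP.
  case=> t; rewrite inE => /eqP hw ->; split; last by rewrite -XP hw.
  by have := imset_f (@Phi k n') (in_setT t); rewrite Phi_image inE.
case=> hD hw.
have : D \in [set D : {ffun 'I_n' -> {ffun 'I_k -> 'I_n'.+1}} | [forall a, D a \in Box k a]] by rewrite inE.
rewrite -Phi_image => /imsetP[t _ eD]; exists t => //.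
by rewrite inE XP -eD.
Qed.

Lemma card_box_P k n' (c : 'I_k.+1 -> bool) (a : 'I_n') :
  #|Box k a :&: [set g | Pz c a g]| =
  (\sum_(beta < k.+1) c beta * ('C(k, beta) * a.+1 ^ (k - beta)))%N.
Proof.
rewrite -(box_count c (ltn_ord (lift ord0 a))).
by apply: eq_card => g; rewrite !inE lift0.
Qed.

Lemma card_box_nP k n' (c : 'I_k.+1 -> bool) (a : 'I_n') :
  #|Box k a :&: [set g | ~~ Pz c a g]| =
  (\sum_(beta < k.+1) (~~ c beta) * ('C(k, beta) * a.+1 ^ (k - beta)))%N.
Proof.
rewrite -(box_count (fun b => ~~ c b) (ltn_ord (lift ord0 a))).
by apply: eq_card => g; rewrite !inE lift0.
Qed.

Lemma F_ident k u (x : 'I_k.+1 -> bool) :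
  (((\sum_(beta < k.+1) x beta * ('C(k, beta) * u.+1 ^ (k - beta)))%N)%:R : rat) =
  ((u.+1 ^ k)%N)%:R * Fj u.+2 (fun b => (nat_of_bool (x b))%:R).
Proof.
rewrite /Fj natr_sum mulr_sumr; apply: eq_bigr => b _.
have hu : ((u.+1)%:R : rat) \is a GRing.unit by rewrite unitfE pnatr_eq0.
have bk : (b <= k)%N by rewrite -ltnS ltn_ord.
rewrite !natrM !natrX /= exprB //.
ring.
Qed.

Local Close Scope ring_scope.
Unset Implicit Arguments.
Set Strict Implicit.

Theorem theorem2p1 (k n : nat) (hk : (0 < k)%N) (hn : (0 < n)%N)
    (c : 'I_k.+1 -> bool) :
  (forall m : nat, (1 <= m <= n)%N ->
     (((@Onum k n c (Posz m + Posz (nat_of_bool (c ord_max)) - 1)%R))%:R : rat)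
     = ((n.-1)`! ^ k)%:R *
       \sum_(J : {set 'I_n.+1} | (J \subset [set j : 'I_n.+1 | (2 <= j)%N])
                                  && (#|J| == m.-1))
         ((\prod_(j in J) Fj (val j) (vecC c)) *
          (\prod_(j : 'I_n.+1 | (2 <= j)%N && (j \notin J)) Fj (val j) (vecC' c))))%R
  /\
  (forall m : nat, (m == 0)%N || (n < m)%N ->
     @Onum k n c (Posz m + Posz (nat_of_bool (c ord_max)) - 1)%R = 0%N).
Proof.
Local Open Scope ring_scope.
case: n hn => // n' _.
split; last by move=> m hm; apply: Onum_zero.
move=> m /andP[m1 mn].
rewrite Onum_Xw // count_Xw.
rewrite (count_family (fun a => Box k a) (fun a g => Pz c a g)).
pose h := fun a : 'I_n' => (lift ord0 (lift ord0 a) : 'I_n'.+2).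
have hv : forall a, val (h a) = a.+2 by move=> a; rewrite /h /= /bump /= !add1n.
transitivity (\sum_(J : {set 'I_n'} | #|J| == m.-1)
   ((\prod_(a in J) (((a.+1 ^ k)%N)%:R * Fj (val (h a)) (vecC c))) *
    (\prod_(a in ~: J) (((a.+1 ^ k)%N)%:R * Fj (val (h a)) (vecC' c))))).
  rewrite natr_sum; apply: eq_bigr => J _; rewrite natrM !natr_prod.
  congr (_ * _); apply: eq_bigr => a _; rewrite hv.
    by rewrite card_box_P F_ident.
  rewrite card_box_nP F_ident; congr (_ * _); rewrite /Fj /vecC'.
  by apply: eq_bigr => b _; case: (c b).
transitivity (\prod_(a < n') (((a.+1 ^ k)%N)%:R : rat) *
  \sum_(J : {set 'I_n'} | #|J| == m.-1)
   ((\prod_(a in J) Fj (val (h a)) (vecC c)) *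
    (\prod_(a in ~: J) Fj (val (h a)) (vecC' c)))).
  rewrite mulr_sumr; apply: eq_bigr => J _.
  rewrite !big_split /= mulrACA; congr (_ * _).
  rewrite [in RHS](bigID (fun a => a \in J)) /=; congr (_ * _).
  by apply: eq_bigl => a; rewrite inE.
congr (_ * _).
  rewrite -natr_prod prod_expn /=; congr ((_ ^ _)%N)%:R.
  by rewrite fact_prod big_add1 big_mkord.
symmetry.
apply: (@reindex_sets _ _ h _ (fun j : 'I_n'.+2 => (2 <= j)%N) _
          (fun j => Fj (val j) (vecC c)) (fun j => Fj (val j) (vecC' c))).
  by move=> x y /lift_inj /lift_inj.
move=> j; apply/idP/imsetP.
  move=> hj; have lt : (j - 2 < n')%N by have := ltn_ord j; lia.
  exists (Ordinal lt); first by [].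
  apply: val_inj; rewrite hv /=; lia.
by case=> a _ ->; rewrite hv.
Qed.
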